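(* In the setting described in the context, for each $\hat{i}\in I$ let $t_{\hat{i}}$ be the optimal value and $\alpha^{(\hat{i})}$ an optimal solution of \[ \min_{\alpha}\ \sum_{j\in J}a_{\hat{i}j}\hat{x}_j-\sum_{j\in J_{\hat{i}}}\alpha_{\hat{i}j}|\hat{x}_j|-b_{\hat{i}} \] subject to $\sum_{j\in J}a_{ij}\hat{x}_j-\sum_{j\in J_i}\alpha_{ij}|\hat{x}_j|\ge b_i$ for all $i\in I$, $\alpha\in\Omega$, $\alpha\ge0$. Let $i^*\in\arg\min_{\hat{i}\in I}t_{\hat{i}}$ and $\alpha^*=\alpha^{(i^* )}$. Then the optimal value of RLO-IU-DG is $t_{i^*}$, and there exists an optimal solution of RLO-IU-DG with $\alpha_i=\alpha^*_i$ for all $i\in I$, $c=\bar{a}_{i^*}(\alpha^*_{i^*},\hat{x})$, and $\pi=e_{i^*}$. Moreover, if for every $i\in I$ either $b_i>0$ or $a_{ij}\neq0$ for some $j\in J\setminus J_i$, then this solution satisfies $c\neq0$ and $\bar{a}_i(\alpha_i,x)\neq0$ for all $i\in I$ and all $x\in\mathbb{R}^n$.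
   Context: Let $I=\{1,\dots,m\}$, $J=\{1,\dots,n\}$. Given are $a_{ij}\in\mathbb{R}$ ($i\in I,j\in J$), $b\in\mathbb{R}^m$, nonempty index sets $J_i\subseteq J$ ($i\in I$), an observed point $\hat{x}\in\mathbb{R}^n$, and a convex set $\Omega$ of collections $\alpha=(\alpha_{ij})_{j\in J_i,i\in I}$; $\alpha_i$ denotes $(\alpha_{ij})_{j\in J_i}$. Let $\mathrm{sgn}(t)=1$ if $t\ge0$ and $-1$ otherwise, and $e_i$ the $i$-th unit vector of $\mathbb{R}^m$. For $\alpha_i\ge0$ and $x\in\mathbb{R}^n$, $\bar{a}_i(\alpha_i,x)\in\mathbb{R}^n$ has components $\bar{a}_{ij}(\alpha_i,x)=a_{ij}-\mathrm{sgn}(x_j)\alpha_{ij}$ if $j\in J_i$ and $\bar{a}_{ij}(\alpha_i,x)=a_{ij}$ if $j\in J\setminus J_i$. The problem RLO-IU-DG is \[ \min_{\alpha,c,u,\pi,\lambda,\mu}\ \sum_{j\in J}c_j\hat{x}_j-\sum_{i\in I}b_i\pi_i \] subject to: $\alpha\in\Omega$; $\alpha_{ij}\hat{x}_j+u_{ij}\ge0$ and $-\alpha_{ij}\hat{x}_j+u_{ij}\ge0$ for all $j\in J_i,i\in I$; $\sum_{j\in J}a_{ij}\hat{x}_j-\sum_{j\in J_i}u_{ij}\ge b_i$ for all $i\in I$; $\alpha_{ij}\ge0$ for all $j\in J_i,i\in I$; $\sum_{i\in I}\pi_i=1$; $\sum_{i\in I}a_{ij}\pi_i+\sum_{i\in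 I:j\in J_i}\alpha_{ij}(\lambda_{ij}-\mu_{ij})=c_j$ for all $j\in J$; $\pi_i=\lambda_{ij}+\mu_{ij}$ for all $j\in J_i,i\in I$; $\pi_i,\lambda_{ij},\mu_{ij}\ge0$ for all $j\in J_i,i\in I$. Here $c\in\mathbb{R}^n$, $\pi\in\mathbb{R}^m$, and $u_{ij},\lambda_{ij},\mu_{ij}$ are real variables indexed by $j\in J_i,i\in I$. *)

(* Defs.v *)
From HB Require Import structures.
From mathcomp Require Import all_boot all_order all_algebra.
Set Implicit Arguments. Unset Strict Implicit. Unset Printing Implicit Defensive.
Import Order.TTheory GRing.Theory Num.Theory.
Local Open Scope ring_scope.

Section RLO.
Variables (R : realFieldType) (m n : nat).

Definition sgn (t : R) : R := if 0 <= t then 1 else -1.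

(* \bar a_i(alpha_i, x): ai = row i of a, Ji = J_i, ali = alpha_i *)
Definition abar (ai : 'I_n -> R) (Ji : {set 'I_n}) (ali : 'I_n -> R)
  (x : 'I_n -> R) : 'I_n -> R :=
  fun j => if j \in Ji then ai j - sgn (x j) * ali j else ai j.

Definition unitv (i : 'I_m) : 'I_m -> R := fun k => if k == i then 1 else 0.

Definition convex_set (Omega : ('I_m -> 'I_n -> R) -> Prop) : Prop :=
  forall al1 al2 (t : R), Omega al1 -> Omega al2 -> 0 <= t -> t <= 1 ->
    Omega (fun i j => t * al1 i j + (1 - t) * al2 i j).

Variables (a : 'I_m -> 'I_n -> R) (b : 'I_m -> R) (J : 'I_m -> {set 'I_n})
  (xhat : 'I_n -> R) (Omega : ('I_m -> 'I_n -> R) -> Prop).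

Definition rlo_feasible (al : 'I_m -> 'I_n -> R) (c : 'I_n -> R)
  (u : 'I_m -> 'I_n -> R) (pi : 'I_m -> R) (lam mu : 'I_m -> 'I_n -> R) : Prop :=
  Omega al /\
  (forall i j, j \in J i ->
     0 <= al i j * xhat j + u i j /\ 0 <= - al i j * xhat j + u i j) /\
  (forall i, b i <= \sum_(j < n) a i j * xhat j - \sum_(j in J i) u i j) /\
  (forall i j, j \in J i -> 0 <= al i j) /\
  \sum_(i < m) pi i = 1 /\
  (forall j, \sum_(i < m) a i j * pi i
             + \sum_(i < m | j \in J i) al i j * (lam i j - mu i j) = c j) /\
  (forall i j, j \in J i -> pi i = lam i j + mu i j) /\
  (forall i, 0 <= pi i) /\
  (forall i j, j \in J i -> 0 <= lam i j /\ 0 <= mu i j).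

Definition rlo_obj (c : 'I_n -> R) (pi : 'I_m -> R) : R :=
  \sum_(j < n) c j * xhat j - \sum_(i < m) b i * pi i.

Definition sub_feasible (al : 'I_m -> 'I_n -> R) : Prop :=
  [/\ (forall i, b i <= \sum_(j < n) a i j * xhat j
                        - \sum_(j in J i) al i j * `|xhat j|),
      Omega al &
      (forall i j, j \in J i -> 0 <= al i j)].

Definition sub_obj (ih : 'I_m) (al : 'I_m -> 'I_n -> R) : R :=
  \sum_(j < n) a ih j * xhat j - \sum_(j in J ih) al ih j * `|xhat j| - b ih.

Definition sub_optimal (ih : 'I_m) (al : 'I_m -> 'I_n -> R) : Prop :=
  sub_feasible al /\ forall al', sub_feasible al' -> sub_obj ih al <= sub_obj ih al'.

End RLO.

(* Main.v *)
Require Import Defs.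
From HB Require Import structures.
From mathcomp Require Import all_boot all_order all_algebra.
From mathcomp Require Import ring lra.
Import Order.TTheory GRing.Theory Num.Theory.
Local Open Scope ring_scope.

Lemma sgn_mul (R : realFieldType) (x : R) : sgn x * x = `|x|.
Proof.
rewrite /sgn; case: ifP => h; first by rewrite mul1r ger0_norm.
by rewrite ltr0_norm ?mulN1r // ltNge h.
Qed.

Lemma norm_bounds (R : realFieldType) (x : R) : x <= `|x| /\ - x <= `|x|.
Proof. by split; [exact: ler_norm | rewrite -normrN; exact: ler_norm]. Qed.

Theorem theorem3 (R : realFieldType) (m n : nat)
  (a : 'I_m -> 'I_n -> R) (b : 'I_m -> R) (J : 'I_m -> {set 'I_n})
  (xhat : 'I_n -> R) (Omega : ('I_m -> 'I_n -> R) -> Prop)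
  (alopt : 'I_m -> ('I_m -> 'I_n -> R)) (istar : 'I_m) :
  (forall i, J i != set0) ->
  convex_set Omega ->
  (forall ih, sub_optimal a b J xhat Omega ih (alopt ih)) ->
  (forall ih, sub_obj a b J xhat istar (alopt istar)
              <= sub_obj a b J xhat ih (alopt ih)) ->
  let t := sub_obj a b J xhat istar (alopt istar) in
  let alstar := alopt istar in
  let cstar := abar (a istar) (J istar) (alstar istar) xhat in
  [/\ (exists u lam mu,
         rlo_feasible a b J xhat Omega alstar cstar u (unitv R istar) lam mu
         /\ rlo_obj b xhat cstar (unitv R istar) = t),
      (forall al c u pi lam mu,
         rlo_feasible a b J xhat Omega al c u pi lam mu ->
         t <= rlo_obj b xhat c pi) &
      ((forall i, 0 < b i \/ exists j, j \notin J i /\ a i j != 0) ->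
         ~ (forall j, cstar j = 0) /\
         (forall i (x : 'I_n -> R),
            ~ (forall j, abar (a i) (J i) (alstar i) x j = 0)))].
Proof.
move=> HJ Hconv Hopt Hmin t alstar cstar.
have [[Hf HO Hpos] _] := Hopt istar.
have Hsum1 : forall (F : 'I_m -> R), \sum_(i < m) F i * unitv R istar i = F istar.
  move=> F; rewrite (bigD1 istar) //= /unitv eqxx mulr1 big1 ?addr0 //.
  by move=> i /negbTE ->; rewrite mulr0.
have Hobj : rlo_obj b xhat cstar (unitv R istar) = t.
  rewrite /rlo_obj Hsum1 /t /sub_obj.
  have -> : \sum_(j < n) cstar j * xhat j = \sum_(j < n) (a istar j * xhat j -
     (if j \in J istar then alstar istar j * `|xhat j| else 0)).
    apply: eq_bigr => j _; rewrite /cstar /abar; case: ifP => _; last by rewrite subr0.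
    by rewrite -sgn_mul; ring.
  by rewrite sumrB -big_mkcond.
have Ht0 : 0 <= t.
  by rewrite /t /sub_obj; have := Hf istar; rewrite -/alstar; lra.
split.
- exists (fun i j => alstar i j * `|xhat j|),
    (fun i j => if i == istar then (if 0 <= xhat j then 0 else 1) else 0),
    (fun i j => if i == istar then (if 0 <= xhat j then 1 else 0) else 0).
  split=> //.
  split; first exact: HO.
  split.
    move=> i j hj; have := Hpos i j hj; have [h1 h2] := norm_bounds _ (xhat j).
    move=> h; have p1 : 0 <= xhat j + `|xhat j| by lra.
    have p2 : 0 <= - xhat j + `|xhat j| by lra.
    have q1 := mulr_ge0 h p1; have q2 := mulr_ge0 h p2.
    rewrite /alstar; split; lra.
  split; first exact: Hf.
  split; first exact: Hpos.
  split.
    by have := Hsum1 (fun=> 1); move=> <-; apply: eq_bigr => i _; rewrite mul1r.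
  split.
    move=> j; rewrite (Hsum1 (fun i => a i j)) big_mkcond (bigD1 istar) //= eqxx.
    rewrite big1 ?addr0; last by move=> i /negbTE ->; case: ifP; rewrite ?subrr ?mulr0.
    rewrite /cstar /abar; case: ifP => hj; last by rewrite addr0.
    rewrite /sgn; case: ifP => _; ring.
  split.
    by move=> i j _; rewrite /unitv; case: (i == istar); case: (0 <= xhat j); ring.
  split.
    by move=> i; rewrite /unitv; case: (i == istar).
  by move=> i j _; case: (i == istar); case: (0 <= xhat j).
- move=> al c u pi lam mu [HO' [Hu [Hb [Hal [Hpi1 [Hc [Hpl [Hpi0 Hlm]]]]]]]].
  have Hsf : sub_feasible a b J xhat Omega al.
    split=> // i.
    have Hs : \sum_(j in J i) al i j * `|xhat j| <= \sum_(j in J i) u i j.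
      apply: ler_sum => j hj; have [h1 h2] := Hu i j hj.
      case: (lerP 0 (xhat j)) => hx.
        by rewrite ger0_norm //; lra.
      by rewrite ltr0_norm //; lra.
    have := Hb i; lra.
  have Hti : forall i, t <= sub_obj a b J xhat i al.
    by move=> i; apply: le_trans (Hmin i) ((Hopt i).2 al Hsf).
  have E1 : \sum_(j < n) c j * xhat j =
      \sum_(j < n) (\sum_(i < m) a i j * pi i) * xhat j +
      \sum_(j < n) (\sum_(i < m | j \in J i) al i j * (lam i j - mu i j)) * xhat j.
    by rewrite -big_split /=; apply: eq_bigr => j _; rewrite -mulrDl Hc.
  have E2 : \sum_(j < n) (\sum_(i < m) a i j * pi i) * xhat j =
      \sum_(i < m) pi i * \sum_(j < n) a i j * xhat j.
    under eq_bigr do rewrite mulr_suml.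
    rewrite exchange_big /=; apply: eq_bigr => i _; rewrite mulr_sumr.
    by apply: eq_bigr => j _; ring.
  have E3 : - \sum_(i < m) pi i * \sum_(j in J i) al i j * `|xhat j| <=
      \sum_(j < n) (\sum_(i < m | j \in J i) al i j * (lam i j - mu i j)) * xhat j.
    have -> : \sum_(j < n) (\sum_(i < m | j \in J i) al i j * (lam i j - mu i j)) * xhat j
       = \sum_(i < m) \sum_(j < n) (if j \in J i then al i j * (lam i j - mu i j) * xhat j else 0).
      rewrite exchange_big /=; apply: eq_bigr => j _; rewrite mulr_suml big_mkcond /=.
      by apply: eq_bigr => i _; case: ifP; rewrite ?mul0r.
    rewrite -sumrN; apply: ler_sum => i _; rewrite mulr_sumr -sumrN big_mkcond /=.
    apply: ler_sum => j _; case: ifP => hj; last by [].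
    have [hl hm] := Hlm i j hj; have ha := Hal i j hj; rewrite (Hpl i j hj).
    have q1 := mulr_ge0 ha hl; have q2 := mulr_ge0 ha hm.
    case: (lerP 0 (xhat j)) => hx.
      rewrite ger0_norm //; have := mulr_ge0 q1 hx; lra.
    rewrite ltr0_norm //; have hx' : 0 <= - xhat j by lra.
    have := mulr_ge0 q2 hx'; lra.
  have E4 : t <= \sum_(i < m) pi i * sub_obj a b J xhat i al.
    have -> : t = \sum_(i < m) pi i * t by rewrite -mulr_suml Hpi1 mul1r.
    by apply: ler_sum => i _; apply: ler_wpM2l.
  have E5 : \sum_(i < m) pi i * sub_obj a b J xhat i al =
     \sum_(i < m) pi i * \sum_(j < n) a i j * xhat j
     - \sum_(i < m) pi i * \sum_(j in J i) al i j * `|xhat j|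
     - \sum_(i < m) b i * pi i.
    rewrite -!sumrB; apply: eq_bigr => i _; rewrite /sub_obj; ring.
  rewrite /rlo_obj E1 E2; lra.
- move=> Hcond; split.
    move=> Hc0; case: (Hcond istar) => [hb | [j [hj ha]]].
      move: Hobj; rewrite /rlo_obj big1; last by move=> j _; rewrite Hc0 mul0r.
      rewrite Hsum1; lra.
    by move: ha; have := Hc0 j; rewrite /cstar /abar (negbTE hj) => ->; rewrite eqxx.
  move=> i x H0; case: (Hcond i) => [hb | [j [hj ha]]]; last first.
    by move: ha; have := H0 j; rewrite /abar (negbTE hj) => ->; rewrite eqxx.
  have Hs : \sum_(j < n) a i j * xhat j <= \sum_(j in J i) alstar i j * `|xhat j|.
    rewrite [X in _ <= X]big_mkcond /=; apply: ler_sum => j _.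
    have := H0 j; rewrite /abar; case: ifP => hj; last by move=> ->; rewrite mul0r.
    move/eqP; rewrite subr_eq0 => /eqP ->.
    have ha := Hpos i j hj; have [h1 h2] := norm_bounds _ (xhat j).
    have p1 : 0 <= `|xhat j| - xhat j by lra.
    have p2 : 0 <= `|xhat j| + xhat j by lra.
    have q1 := mulr_ge0 ha p1; have q2 := mulr_ge0 ha p2.
    rewrite /alstar /sgn; case: ifP => _; lra.
  have := Hf i; rewrite -/alstar; lra.
Qed.
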